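(* Let \((Q, \preccurlyeq_{Q})\) be a totally ordered set having a smallest element and satisfying \(|Q| > 1\). Then the following conditions are equivalent. (i) The order topology of \((Q,\preccurlyeq_Q)\) is separable. (ii) For every \(\preccurlyeq_{Q}\)-pseudoultrametric \(d\) there is a \(\preccurlyeq_{\mathbb{R}_{0}}\)-pseudoultrametric \(\rho\) such that \(d\) and \(\rho\) are weakly similar. (iii) For every \(\preccurlyeq_{Q}\)-pseudoultrametric \(d\) there is a \(\preccurlyeq_{\mathbb{R}_{0}}\)-pseudoultrametric \(\rho\) such that \(d\) and \(\rho\) are combinatorially similar.
   Context: \(\mathbb{R}_0:=[0,\infty)\times\{0,1\}\) with the lexicographic linear order: \(\langle a,b\rangle\preccurlyeq_{\mathbb{R}_0}\langle c,e\rangle\) iff \(a<c\), or \(a=c\) and \(b\le e\); its smallest element is \(\langle 0,0\rangle\). The order topology on a totally ordered \((Q,\preccurlyeq_Q)\) is the topology with subbase consisting of all sets \(\{q: q\prec_Q a\}\) and \(\{q: a\prec_Q q\}\), \(a\in Q\); a space is separable if it has a countable subset meeting every nonempty open set. For a poset \((P,\preccurlyeq_P)\) with smallest element \(p_0\), \(d\colon X^2\to P\) (\(X\) nonempty) is a \(\preccurlyeq_P\)-pseudoultrametric if \(d\) is symmetric, \(d(x,x)=p_0\) for all \(x\), and for every triple \(\langle x_1,x_2,x_3\rangle\) in \(X\) there is a permutation \((i_1,i_2,i_3)\) of \((1,2,3)\) with \(d(x_{i_1},x_{i_3})\preccurlyeq_P d(x_{i_1},x_{i_2})=d(x_{i_2},x_{i_3})\).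 For a \(\preccurlyeq_Q\)-pseudoultrametric \(d\) on \(X\) and a \(\preccurlyeq_{\mathbb{R}_0}\)-pseudoultrametric \(\rho\) on \(Y\): they are combinatorially similar if there are bijections \(h\colon X\to Y\), \(f\colon d(X^2)\to\rho(Y^2)\) with \(\rho(h(x),h(y))=f(d(x,y))\) for all \(x,y\in X\); they are weakly similar if this holds with \(f\) an order isomorphism between the subposets \(d(X^2)\subseteq Q\) and \(\rho(Y^2)\subseteq\mathbb{R}_0\). *)

(* Defs.v *)
From Stdlib Require Import Reals List.
Open Scope R_scope.

Record total_order (Q : Type) (le : Q -> Q -> Prop) : Prop := {
  to_refl : forall a, le a a;
  to_antisym : forall a b, le a b -> le b a -> a = b;
  to_trans : forall a b c, le a b -> le b c -> le a c;
  to_total : forall a b, le a b \/ le b a }.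

Definition strict {Q : Type} (le : Q -> Q -> Prop) (a b : Q) : Prop :=
  le a b /\ a <> b.

Definition order_subbase {Q : Type} (le : Q -> Q -> Prop) (S : Q -> Prop) : Prop :=
  exists a, (forall q, S q <-> strict le q a) \/ (forall q, S q <-> strict le a q).

(* Open sets of the topology generated by the subbase: unions of finite
   intersections of subbase elements (the empty intersection is Q). *)
Definition order_open {Q : Type} (le : Q -> Q -> Prop) (U : Q -> Prop) : Prop :=
  forall x, U x -> exists l : list (Q -> Prop),
    Forall (order_subbase le) l /\ (forall S, In S l -> S x) /\
    (forall y, (forall S, In S l -> S y) -> U y).

Definition countable_set {Q : Type} (D : Q -> Prop) : Prop :=
  exists g : Q -> nat, forall x y, D x -> D y -> g x = g y -> x = y.

Definition order_separable {Q : Type} (le : Q -> Q -> Prop) : Prop :=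
  exists D : Q -> Prop, countable_set D /\
    forall U, order_open le U -> (exists x, U x) -> exists x, U x /\ D x.

Definition tri {X P : Type} (leP : P -> P -> Prop) (d : X -> X -> P) (a b c : X) : Prop :=
  leP (d a c) (d a b) /\ d a b = d b c.

Definition pseudoultrametric {X P : Type} (leP : P -> P -> Prop) (p0 : P)
  (d : X -> X -> P) : Prop :=
  inhabited X /\
  (forall x y, d x y = d y x) /\
  (forall x, d x x = p0) /\
  (forall x1 x2 x3,
     tri leP d x1 x2 x3 \/ tri leP d x1 x3 x2 \/ tri leP d x2 x1 x3 \/
     tri leP d x2 x3 x1 \/ tri leP d x3 x1 x2 \/ tri leP d x3 x2 x1).

(* R_0 = [0,oo) x {0,1} with the lexicographic order; {0,1} is bool, false = 0. *)
Definition R0lex : Type := { p : R * bool | 0 <= fst p }.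

Definition leR0lex (u v : R0lex) : Prop :=
  fst (proj1_sig u) < fst (proj1_sig v) \/
  (fst (proj1_sig u) = fst (proj1_sig v) /\
   Bool.le (snd (proj1_sig u)) (snd (proj1_sig v))).

Definition R0lex_bot : R0lex := exist _ (0, false) (Rle_refl 0).

Definition bijective_map {X Y : Type} (h : X -> Y) : Prop :=
  (forall x y, h x = h y -> x = y) /\ (forall y, exists x, h x = y).

Definition in_range {X P : Type} (d : X -> X -> P) (p : P) : Prop :=
  exists x y, d x y = p.

(* f restricted to d(X^2) is a bijection onto rho(Y^2), and
   rho(h x, h y) = f (d x y). *)
Definition comb_similar_via {X Y Q : Type} (d : X -> X -> Q) (rho : Y -> Y -> R0lex)
  (h : X -> Y) (f : Q -> R0lex) : Prop :=
  bijective_map h /\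
  (forall x y, rho (h x) (h y) = f (d x y)) /\
  (forall q, in_range d q -> in_range rho (f q)) /\
  (forall q1 q2, in_range d q1 -> in_range d q2 -> f q1 = f q2 -> q1 = q2) /\
  (forall r, in_range rho r -> exists q, in_range d q /\ f q = r).

Definition combinatorially_similar {X Y Q : Type} (d : X -> X -> Q)
  (rho : Y -> Y -> R0lex) : Prop :=
  exists (h : X -> Y) (f : Q -> R0lex), comb_similar_via d rho h f.

Definition weakly_similar {X Y Q : Type} (leQ : Q -> Q -> Prop) (d : X -> X -> Q)
  (rho : Y -> Y -> R0lex) : Prop :=
  exists (h : X -> Y) (f : Q -> R0lex), comb_similar_via d rho h f /\
    (forall q1 q2, in_range d q1 -> in_range d q2 ->
       (leQ q1 q2 <-> leR0lex (f q1) (f q2))).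

(* Main.v *)
Require Import Defs.
From Stdlib Require Import Reals List Lra Lia ZArith.
From Stdlib Require Import ClassicalEpsilon ProofIrrelevance Classical.
From Stdlib Require Cantor.
Open Scope R_scope.

Definition emi := excluded_middle_informative.

Lemma R0lex_eq (u v : R0lex) : proj1_sig u = proj1_sig v -> u = v.
Proof. destruct u as [pu hu], v as [pv hv]; simpl; intros ->. f_equal; apply proof_irrelevance. Qed.

Definition ltR0 (u v : R0lex) := leR0lex u v /\ u <> v.

Lemma leR0_refl u : leR0lex u u.
Proof. right; split; [reflexivity|]. destruct (snd (proj1_sig u)); simpl; auto. Qed.

Lemma leR0_fst u v : leR0lex u v -> fst (proj1_sig u) <= fst (proj1_sig v).
Proof. unfold leR0lex; intros [H|[H _]]; lra. Qed.

Lemma ltR0_of_fst u v : fst (proj1_sig u) < fst (proj1_sig v) -> ltR0 u v.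
Proof. intros H; split; [left; exact H| intros ->; lra]. Qed.

Lemma leR0_antisym u v : leR0lex u v -> leR0lex v u -> u = v.
Proof.
  unfold leR0lex; destruct u as [[a b] ha], v as [[c e] hc]; simpl.
  intros H1 H2; apply R0lex_eq; simpl.
  destruct H1 as [H1|[H1 H1']]; destruct H2 as [H2|[H2 H2']]; try lra.
  subst. destruct b, e; simpl in *; try reflexivity; try discriminate; contradiction.
Qed.

Lemma ltR0_same u v : ltR0 u v -> fst (proj1_sig u) = fst (proj1_sig v) ->
  snd (proj1_sig u) = false /\ snd (proj1_sig v) = true.
Proof.
  destruct u as [[a b] ha], v as [[c e] hc]; unfold ltR0, leR0lex; simpl.
  intros [[H|[_ H]] Hne] Heq; [lra|]. subst.
  destruct b, e; simpl in *; try discriminate; auto;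
  exfalso; apply Hne; apply R0lex_eq; reflexivity.
Qed.

Lemma bot_le u : leR0lex R0lex_bot u.
Proof.
  destruct u as [[a b] ha]; unfold leR0lex; simpl in *.
  destruct (Rle_lt_or_eq_dec 0 a ha); [left; auto | right; split; auto; exact I].
Qed.


Lemma strict_trans_le {Q} (leQ : Q -> Q -> Prop) (Htot : total_order Q leQ) a b c :
  strict leQ a b -> leQ b c -> strict leQ a c.
Proof.
  intros [Hab Hne] Hbc; split; [eapply to_trans; eauto|].
  intros ->. apply Hne. apply (to_antisym _ _ Htot); auto.
Qed.

Lemma le_strict_trans {Q} (leQ : Q -> Q -> Prop) (Htot : total_order Q leQ) a b c :
  leQ a b -> strict leQ b c -> strict leQ a c.
Proof.
  intros Hab [Hbc Hne]; split; [eapply to_trans; eauto|].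
  intros ->. apply Hne. apply (to_antisym _ _ Htot); auto.
Qed.

Lemma trich {Q} (leQ : Q -> Q -> Prop) (Htot : total_order Q leQ) a b :
  a = b \/ strict leQ a b \/ strict leQ b a.
Proof.
  destruct (classic (a = b)) as [|Hne]; [auto|].
  destruct (to_total _ _ Htot a b); [right;left|right;right]; split; auto.
Qed.

Lemma strict_not_le {Q} (leQ : Q -> Q -> Prop) (Htot : total_order Q leQ) a b :
  strict leQ a b -> ~ leQ b a.
Proof. intros [H Hne] H'. apply Hne. apply (to_antisym _ _ Htot); auto. Qed.

Lemma reflect_le {Q} (leQ : Q -> Q -> Prop) (Htot : total_order Q leQ) (F : Q -> R0lex)
  (HF : forall x y, strict leQ x y -> ltR0 (F x) (F y)) x y :
  leR0lex (F x) (F y) -> leQ x y.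
Proof.
  intros H. destruct (trich leQ Htot x y) as [->|[[H1 _]|H1]].
  - apply (to_refl _ _ Htot).
  - exact H1.
  - destruct (HF _ _ H1) as [H2 Hne]. exfalso; apply Hne. apply leR0_antisym; auto.
Qed.

Lemma reflect_lt {Q} (leQ : Q -> Q -> Prop) (Htot : total_order Q leQ) (F : Q -> R0lex)
  (HF : forall x y, strict leQ x y -> ltR0 (F x) (F y)) x y :
  ltR0 (F x) (F y) -> strict leQ x y.
Proof.
  intros [H Hne]. split; [eapply reflect_le; eauto|]. intros ->; auto.
Qed.

Lemma mono_le {Q} (leQ : Q -> Q -> Prop) (Htot : total_order Q leQ) (F : Q -> R0lex)
  (HF : forall x y, strict leQ x y -> ltR0 (F x) (F y)) x y :
  leQ x y -> leR0lex (F x) (F y).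
Proof.
  intros H. destruct (classic (x = y)) as [->|Hne]; [apply leR0_refl|].
  apply HF; split; auto.
Qed.

Definition rat (k : nat) : R :=
  let p := Cantor.of_nat k in INR (snd p) / INR (S (fst p)).

Lemma rat_dense a b : 0 <= a < b -> exists k, a < rat k < b.
Proof.
  intros [Ha Hab].
  destruct (archimed_cor1 (b - a)) as [N [HN HN0]]; [lra|].
  destruct N as [|n]; [lia|].
  set (M := INR (S n)) in *.
  assert (HM : 0 < M) by (apply lt_0_INR; lia).
  assert (HMb : 1 < (b - a) * M).
  { apply (Rmult_lt_compat_r M) in HN; auto. rewrite Rinv_l in HN; lra. }
  destruct (archimed (a * M)) as [H1 H2].
  assert (Hup : (0 <= up (a * M))%Z).
  { apply le_IZR. assert (0 <= a * M) by (apply Rmult_le_pos; lra). lra. }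
  exists (Cantor.to_nat (n, Z.to_nat (up (a * M)))).
  unfold rat. rewrite Cantor.cancel_of_to. simpl fst; simpl snd. fold M.
  rewrite INR_IZR_INZ, Z2Nat.id by exact Hup.
  split.
  - apply (Rmult_lt_reg_r M); auto. unfold Rdiv. rewrite Rmult_assoc, Rinv_l by lra. lra.
  - apply (Rmult_lt_reg_r M); auto. unfold Rdiv. rewrite Rmult_assoc, Rinv_l by lra. lra.
Qed.

Definition fst' {Q} (F : Q -> R0lex) (x : Q) : R := fst (proj1_sig (F x)).

Definition sel1 {Q} (q0 : Q) (F : Q -> R0lex) k1 k2 : Q :=
  epsilon (inhabits q0) (fun x => rat k1 < fst' F x < rat k2).
Definition selL {Q} (leQ : Q -> Q -> Prop) (q0 : Q) (F : Q -> R0lex) k : Q :=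
  epsilon (inhabits q0) (fun x => fst' F x < rat k /\ forall y, fst' F y < rat k -> leQ y x).
Definition selH {Q} (leQ : Q -> Q -> Prop) (q0 : Q) (F : Q -> R0lex) k : Q :=
  epsilon (inhabits q0) (fun x => rat k < fst' F x /\ forall y, rat k < fst' F y -> leQ x y).

Definition enumD {Q} (leQ : Q -> Q -> Prop) (q0 : Q) (F : Q -> R0lex) (n : nat) : Q :=
  let (i, j) := Cantor.of_nat n in
  match i with
  | O => q0
  | 1%nat => selL leQ q0 F j
  | 2%nat => selH leQ q0 F j
  | _ => let (k1, k2) := Cantor.of_nat j in sel1 q0 F k1 k2
  end.

Definition DD {Q} (leQ : Q -> Q -> Prop) (q0 : Q) (F : Q -> R0lex) (x : Q) : Prop :=
  exists n, enumD leQ q0 F n = x.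

Lemma DD_count {Q} (leQ : Q -> Q -> Prop) (q0 : Q) (F : Q -> R0lex) :
  countable_set (DD leQ q0 F).
Proof.
  exists (fun x => epsilon (inhabits 0%nat) (fun n => enumD leQ q0 F n = x)).
  intros x y Hx Hy Hg.
  pose proof (epsilon_spec (inhabits 0%nat) _ Hx) as Ex. pose proof (epsilon_spec (inhabits 0%nat) _ Hy) as Ey.
  simpl in *. rewrite <- Ex, <- Ey, Hg. reflexivity.
Qed.

Lemma DD_q0 {Q} leQ (q0 : Q) F : DD leQ q0 F q0.
Proof. exists (Cantor.to_nat (0, 0)%nat). unfold enumD. rewrite Cantor.cancel_of_to. reflexivity. Qed.
Lemma DD_L {Q} leQ (q0 : Q) F k : DD leQ q0 F (selL leQ q0 F k).
Proof. exists (Cantor.to_nat (1, k)%nat). unfold enumD. rewrite Cantor.cancel_of_to. reflexivity. Qed.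
Lemma DD_H {Q} leQ (q0 : Q) F k : DD leQ q0 F (selH leQ q0 F k).
Proof. exists (Cantor.to_nat (2, k)%nat). unfold enumD. rewrite Cantor.cancel_of_to. reflexivity. Qed.
Lemma DD_1 {Q} leQ (q0 : Q) F k1 k2 : DD leQ q0 F (sel1 q0 F k1 k2).
Proof. exists (Cantor.to_nat (3, Cantor.to_nat (k1, k2))%nat). unfold enumD.
  rewrite !Cantor.cancel_of_to. reflexivity. Qed.

Lemma fst'_nonneg {Q} (F : Q -> R0lex) x : 0 <= fst' F x.
Proof. unfold fst'. exact (proj2_sig (F x)). Qed.


Lemma lemA {Q} (leQ : Q -> Q -> Prop) (q0 : Q) (Htot : total_order Q leQ) (F : Q -> R0lex)
  (HF : forall x y, strict leQ x y -> ltR0 (F x) (F y)) a b e :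
  fst' F a < fst' F e < fst' F b ->
  exists d, DD leQ q0 F d /\ strict leQ a d /\ strict leQ d b.
Proof.
  intros [H1 H2].
  destruct (rat_dense (fst' F a) (fst' F e)) as [k1 Hk1]; [split; auto; apply fst'_nonneg|].
  destruct (rat_dense (fst' F e) (fst' F b)) as [k2 Hk2]; [split; auto; apply fst'_nonneg|].
  exists (sel1 q0 F k1 k2). split; [apply DD_1|].
  assert (Hs : rat k1 < fst' F (sel1 q0 F k1 k2) < rat k2).
  { unfold sel1. apply epsilon_spec. exists e; lra. }
  split; apply (reflect_lt leQ Htot F HF); apply ltR0_of_fst; fold (fst' F a); fold (fst' F b);
    fold (fst' F (sel1 q0 F k1 k2)); lra.
Qed.

Lemma lemInt {Q} (leQ : Q -> Q -> Prop) (q0 : Q) (Htot : total_order Q leQ) (F : Q -> R0lex)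
  (HF : forall x y, strict leQ x y -> ltR0 (F x) (F y)) a b c :
  strict leQ a c -> strict leQ c b ->
  exists d, DD leQ q0 F d /\ strict leQ a d /\ strict leQ d b.
Proof.
  intros Hac Hcb.
  pose proof (HF _ _ Hac) as Lac. pose proof (HF _ _ Hcb) as Lcb.
  pose proof (leR0_fst _ _ (proj1 Lac)) as Fac. pose proof (leR0_fst _ _ (proj1 Lcb)) as Fcb.
  fold (fst' F a) (fst' F b) (fst' F c) in Fac, Fcb.
  destruct (Rle_lt_or_eq_dec _ _ Fac) as [Eac|Eac].
  - destruct (Rle_lt_or_eq_dec _ _ Fcb) as [Ecb|Ecb].
    + apply (lemA leQ q0 Htot F HF a b c); lra.
    + destruct (ltR0_same _ _ Lcb Ecb) as [Sc Sb].
      destruct (rat_dense (fst' F a) (fst' F c)) as [k Hk]; [split; auto; apply fst'_nonneg|].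
      destruct (classic (exists e, fst' F a < fst' F e < fst' F c)) as [[e He]|Hne].
      * apply (lemA leQ q0 Htot F HF a b e); lra.
      * assert (Hspec : forall x, (rat k < fst' F x /\ forall y, rat k < fst' F y -> leQ x y) -> x = c).
        { intros x [Hx1 Hx2].
          assert (Hc : forall y, rat k < fst' F y -> leQ c y).
          { intros y Hy. apply (reflect_le leQ Htot F HF).
            destruct (Rle_or_lt (fst' F c) (fst' F y)) as [Hle|Hlt].
            - destruct (Rle_lt_or_eq_dec _ _ Hle) as [Hl|He].
              + left; exact Hl.
              + right; split; [exact He|]. unfold fst' in *. rewrite Sc; exact I.
            - exfalso; apply Hne; exists y; lra. }
          apply (to_antisym _ _ Htot); [apply Hx2; lra| apply Hc; lra]. }
        exists c. split; [|split; auto].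
        rewrite <- (Hspec (selH leQ q0 F k)); [apply DD_H|].
        unfold selH. apply epsilon_spec. exists c. split; [lra|].
        intros y Hy. apply (reflect_le leQ Htot F HF).
        destruct (Rle_or_lt (fst' F c) (fst' F y)) as [Hle|Hlt].
        -- destruct (Rle_lt_or_eq_dec _ _ Hle) as [Hl|He].
           ++ left; exact Hl.
           ++ right; split; [exact He|]. unfold fst' in *. rewrite Sc; exact I.
        -- exfalso; apply Hne; exists y; lra.
  - destruct (ltR0_same _ _ Lac Eac) as [Sa Sc].
    assert (Ecb : fst' F c < fst' F b).
    { destruct (Rle_lt_or_eq_dec _ _ Fcb) as [E|E]; auto.
      destruct (ltR0_same _ _ Lcb E) as [Sc' _]. unfold fst' in *. congruence. }
    destruct (rat_dense (fst' F c) (fst' F b)) as [k Hk]; [split; auto; apply fst'_nonneg|].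
    destruct (classic (exists e, fst' F c < fst' F e < fst' F b)) as [[e He]|Hne].
    + apply (lemA leQ q0 Htot F HF a b e); lra.
    + assert (Hc : forall y, fst' F y < rat k -> leQ y c).
      { intros y Hy. apply (reflect_le leQ Htot F HF).
        destruct (Rle_or_lt (fst' F y) (fst' F c)) as [Hle|Hlt].
        - destruct (Rle_lt_or_eq_dec _ _ Hle) as [Hl|He].
          + left; exact Hl.
          + right; split; [exact He|]. unfold fst' in *. rewrite Sc.
            destruct (snd (proj1_sig (F y))); simpl; auto.
        - exfalso; apply Hne; exists y; lra. }
      assert (Hspec : forall x, (fst' F x < rat k /\ forall y, fst' F y < rat k -> leQ y x) -> x = c).
      { intros x [Hx1 Hx2]. apply (to_antisym _ _ Htot); [apply Hc; lra| apply Hx2; lra]. }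
      exists c. split; [|split; auto].
      rewrite <- (Hspec (selL leQ q0 F k)); [apply DD_L|].
      unfold selL. apply epsilon_spec. exists c. split; [lra|exact Hc].
Qed.

Lemma lemMax {Q} (leQ : Q -> Q -> Prop) (q0 : Q) (Htot : total_order Q leQ) (F : Q -> R0lex)
  (HF : forall x y, strict leQ x y -> ltR0 (F x) (F y)) c :
  (forall y, leQ y c) -> DD leQ q0 F c.
Proof.
  intros Hmax.
  destruct (rat_dense (fst' F c) (fst' F c + 1)) as [k Hk]; [split; [apply fst'_nonneg|lra]|].
  assert (Hspec : forall x, (fst' F x < rat k /\ forall y, fst' F y < rat k -> leQ y x) -> x = c).
  { intros x [Hx1 Hx2]. apply (to_antisym _ _ Htot); [apply Hmax| apply Hx2; lra]. }
  rewrite <- (Hspec (selL leQ q0 F k)); [apply DD_L|].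
  unfold selL. apply epsilon_spec. exists c. split; [lra|]. intros; apply Hmax.
Qed.

Definition loP {Q} (leQ : Q -> Q -> Prop) (y : Q) (lo : option Q) : Prop :=
  match lo with Some a => strict leQ a y | None => True end.
Definition hiP {Q} (leQ : Q -> Q -> Prop) (y : Q) (hi : option Q) : Prop :=
  match hi with Some b => strict leQ y b | None => True end.

Definition minopt {Q} (leQ : Q -> Q -> Prop) (a : Q) (hi : option Q) : Q :=
  match hi with None => a | Some b => if emi (leQ a b) then a else b end.
Definition maxopt {Q} (leQ : Q -> Q -> Prop) (a : Q) (lo : option Q) : Q :=
  match lo with None => a | Some b => if emi (leQ a b) then b else a end.

Lemma minopt_spec {Q} (leQ : Q -> Q -> Prop) (Htot : total_order Q leQ) a hi c :
  strict leQ c a -> hiP leQ c hi ->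
  strict leQ c (minopt leQ a hi) /\
  forall y, strict leQ y (minopt leQ a hi) -> strict leQ y a /\ hiP leQ y hi.
Proof.
  intros Hca Hhi. destruct hi as [b|]; simpl in *.
  - destruct (emi (leQ a b)) as [Hab|Hab].
    + split; auto. intros y Hy; split; auto. eapply strict_trans_le; eauto.
    + assert (Hba : leQ b a) by (destruct (to_total _ _ Htot a b); tauto).
      split; auto. intros y Hy; split; auto. eapply strict_trans_le; eauto.
  - split; auto.
Qed.

Lemma maxopt_spec {Q} (leQ : Q -> Q -> Prop) (Htot : total_order Q leQ) a lo c :
  strict leQ a c -> loP leQ c lo ->
  strict leQ (maxopt leQ a lo) c /\
  forall y, strict leQ (maxopt leQ a lo) y -> strict leQ a y /\ loP leQ y lo.
Proof.
  intros Hca Hlo. destruct lo as [b|]; simpl in *.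
  - destruct (emi (leQ a b)) as [Hab|Hab].
    + split; auto. intros y Hy; split; auto. eapply le_strict_trans; eauto.
    + assert (Hba : leQ b a) by (destruct (to_total _ _ Htot a b); tauto).
      split; auto. intros y Hy; split; auto. eapply le_strict_trans; eauto.
  - split; auto.
Qed.

Lemma bounds {Q} (leQ : Q -> Q -> Prop) (Htot : total_order Q leQ) c l :
  Forall (order_subbase leQ) l -> (forall S, In S l -> S c) ->
  exists lo hi, loP leQ c lo /\ hiP leQ c hi /\
    forall y, loP leQ y lo -> hiP leQ y hi -> forall S, In S l -> S y.
Proof.
  induction l as [|S l IH]; intros Hf Hin.
  - exists None, None. simpl. tauto.
  - inversion Hf as [|S' l' HS Hl]; subst.
    destruct IH as [lo [hi [Hlo [Hhi Hall]]]]; auto.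
    { intros S' H; apply Hin; right; auto. }
    assert (HSc : S c) by (apply Hin; left; auto).
    destruct HS as [a [Ha|Ha]].
    +
      destruct (minopt_spec leQ Htot a hi c) as [H1 H2]; [apply Ha; auto|auto|].
      exists lo, (Some (minopt leQ a hi)). simpl. split; auto. split; auto.
      intros y Hy1 Hy2 S' [<-|HS'].
      * apply Ha. apply (H2 y Hy2).
      * apply Hall; auto. apply (H2 y Hy2).
    + destruct (maxopt_spec leQ Htot a lo c) as [H1 H2]; [apply Ha; auto|auto|].
      exists (Some (maxopt leQ a lo)), hi. simpl. split; auto. split; auto.
      intros y Hy1 Hy2 S' [<-|HS'].
      * apply Ha. apply (H2 y Hy1).
      * apply Hall; auto. apply (H2 y Hy1).
Qed.

Lemma sep_of_embed {Q} (leQ : Q -> Q -> Prop) (q0 : Q) (Htot : total_order Q leQ)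
  (Hq0 : forall q, leQ q0 q) (F : Q -> R0lex)
  (HF : forall x y, strict leQ x y -> ltR0 (F x) (F y)) : order_separable leQ.
Proof.
  exists (DD leQ q0 F). split; [apply DD_count|].
  intros U HU [c Hc].
  destruct (HU c Hc) as [l [Hl1 [Hl2 Hl3]]].
  destruct (bounds leQ Htot c l Hl1 Hl2) as [lo [hi [Hlo [Hhi Hall]]]].
  assert (Hfin : exists d, DD leQ q0 F d /\ loP leQ d lo /\ hiP leQ d hi).
  { assert (HL : c = q0 \/ exists a, strict leQ a c /\ forall y, strict leQ a y -> loP leQ y lo).
    { destruct lo as [a|].
      - right; exists a; simpl in *; auto.
      - destruct (classic (c = q0)) as [|Hne]; [left; auto|].
        right; exists q0; split; [split; auto|simpl; auto]. }
    assert (HH : (forall y, leQ y c) \/ exists b, strict leQ c b /\ forall y, strict leQ y b -> hiP leQ y hi).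
    { destruct hi as [b|].
      - right; exists b; simpl in *; auto.
      - destruct (classic (exists b, strict leQ c b)) as [[b Hb]|Hnb].
        + right; exists b; simpl; auto.
        + left. intros y. destruct (to_total _ _ Htot y c) as [|Hcy]; auto.
          destruct (classic (c = y)) as [<-|Hne]; [apply (to_refl _ _ Htot)|].
          exfalso; apply Hnb; exists y; split; auto. }
    destruct HL as [->|[a [Ha Ha']]].
    { exists q0; split; [apply DD_q0|auto]. }
    destruct HH as [Hmax|[b [Hb Hb']]].
    { exists c; split; [apply (lemMax leQ q0 Htot F HF c Hmax)|]. split; auto. }
    destruct (lemInt leQ q0 Htot F HF a b c Ha Hb) as [d [Hd1 [Hd2 Hd3]]].
    exists d; auto. }
  destruct Hfin as [d [Hd1 [Hd2 Hd3]]].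
  exists d; split; [apply Hl3; apply Hall; auto | auto].
Qed.

Definition term {Q} (leQ : Q -> Q -> Prop) (D : Q -> Prop) (g : Q -> nat) (x : Q) (N : nat) : R :=
  if emi (exists d, D d /\ g d = N /\ strict leQ d x) then (/2)^N else 0.

Fixpoint psum {Q} (leQ : Q -> Q -> Prop) D g x N : R :=
  match N with O => 0 | S n => psum leQ D g x n + term leQ D g x n end.

Lemma term_bounds {Q} (leQ : Q -> Q -> Prop) D g x N :
  0 <= term leQ D g x N <= (/2)^N.
Proof.
  unfold term. destruct emi; split; try lra.
  all: apply pow_le; lra.
Qed.

Lemma psum_bound {Q} (leQ : Q -> Q -> Prop) D g x N :
  psum leQ D g x N <= 2 - 2 * (/2)^N.
Proof.
  induction N as [|n IH]; simpl; [lra|].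
  pose proof (term_bounds leQ D g x n). lra.
Qed.

Lemma psum_mono_N {Q} (leQ : Q -> Q -> Prop) D g x n m :
  (n <= m)%nat -> psum leQ D g x n <= psum leQ D g x m.
Proof.
  induction 1; [lra|]. simpl. pose proof (term_bounds leQ D g x m). lra.
Qed.

Lemma term_mono_x {Q} (leQ : Q -> Q -> Prop) (Htot : total_order Q leQ) D g x y N :
  leQ x y -> term leQ D g x N <= term leQ D g y N.
Proof.
  intros Hxy. unfold term. destruct (emi (exists d, D d /\ g d = N /\ strict leQ d x)) as [[d [H1 [H2 H3]]]|].
  - destruct emi as [|Hn]; [lra|]. exfalso; apply Hn. exists d; repeat split; auto.
    all: destruct (strict_trans_le leQ Htot d x y H3 Hxy); auto.
  - destruct emi; [apply pow_le|]; lra.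
Qed.

Lemma psum_mono_x {Q} (leQ : Q -> Q -> Prop) (Htot : total_order Q leQ) D g x y N :
  leQ x y -> psum leQ D g x N <= psum leQ D g y N.
Proof.
  intros H; induction N; simpl; [lra|]. pose proof (term_mono_x leQ Htot D g x y N H). lra.
Qed.

Lemma psum_gap {Q} (leQ : Q -> Q -> Prop) (Htot : total_order Q leQ) D g
  (Hg : forall x y, D x -> D y -> g x = g y -> x = y) x y dd :
  D dd -> leQ x dd -> strict leQ dd y ->
  forall N, (g dd < N)%nat -> psum leQ D g x N + (/2)^(g dd) <= psum leQ D g y N.
Proof.
  intros HD Hx Hy. assert (Hxy : leQ x y) by (apply (to_trans _ _ Htot x dd y); auto; apply Hy).
  induction N as [|n IH]; intros HN; [lia|]. simpl.
  destruct (Nat.eq_dec (g dd) n) as [E|E].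
  - subst n.
    assert (Ty : term leQ D g y (g dd) = (/2)^(g dd)).
    { unfold term. destruct emi as [|Hn]; auto. exfalso; apply Hn; exists dd; auto. }
    assert (Tx : term leQ D g x (g dd) = 0).
    { unfold term. destruct emi as [[d' [H1 [H2 H3]]]|]; auto.
      exfalso. assert (d' = dd) by (apply Hg; auto). subst d'.
      apply (strict_not_le leQ Htot dd x H3 Hx). }
    pose proof (psum_mono_x leQ Htot D g x y (g dd) Hxy). lra.
  - pose proof (IH ltac:(lia)). pose proof (term_mono_x leQ Htot D g x y n Hxy). lra.
Qed.

Definition psumset {Q} (leQ : Q -> Q -> Prop) D g x : R -> Prop :=
  fun r => exists N, r = psum leQ D g x N.

Lemma psumset_bound {Q} (leQ : Q -> Q -> Prop) D g x : bound (psumset leQ D g x).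
Proof.
  exists 2. intros r [N ->]. pose proof (psum_bound leQ D g x N).
  pose proof (pow_le (/2) N ltac:(lra)). lra.
Qed.

Lemma psumset_ne {Q} (leQ : Q -> Q -> Prop) D g x : exists r, psumset leQ D g x r.
Proof. exists 0, O. reflexivity. Qed.

Definition phi {Q} (leQ : Q -> Q -> Prop) D g x : R :=
  proj1_sig (completeness _ (psumset_bound leQ D g x) (psumset_ne leQ D g x)).

Lemma phi_ge {Q} (leQ : Q -> Q -> Prop) D g x N : psum leQ D g x N <= phi leQ D g x.
Proof.
  unfold phi. destruct completeness as [m [Hm1 Hm2]]. simpl. apply Hm1. exists N; auto.
Qed.

Lemma phi_le {Q} (leQ : Q -> Q -> Prop) D g x M :
  (forall N, psum leQ D g x N <= M) -> phi leQ D g x <= M.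
Proof.
  intros H. unfold phi. destruct completeness as [m [Hm1 Hm2]]. simpl. apply Hm2.
  intros r [N ->]. auto.
Qed.

Lemma phi_nonneg {Q} (leQ : Q -> Q -> Prop) D g x : 0 <= phi leQ D g x.
Proof. apply (phi_ge leQ D g x O). Qed.

Lemma phi_mono {Q} (leQ : Q -> Q -> Prop) (Htot : total_order Q leQ) D g x y :
  leQ x y -> phi leQ D g x <= phi leQ D g y.
Proof.
  intros H. apply phi_le. intros N. eapply Rle_trans; [apply (psum_mono_x leQ Htot D g x y N H)|].
  apply phi_ge.
Qed.

Lemma phi_gap {Q} (leQ : Q -> Q -> Prop) (Htot : total_order Q leQ) D g
  (Hg : forall x y, D x -> D y -> g x = g y -> x = y) x y dd :
  D dd -> leQ x dd -> strict leQ dd y -> phi leQ D g x < phi leQ D g y.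
Proof.
  intros HD Hx Hy.
  assert (H : phi leQ D g x <= phi leQ D g y - (/2)^(g dd)).
  { apply phi_le. intros N.
    pose proof (psum_mono_N leQ D g x N (Nat.max N (S (g dd))) ltac:(lia)).
    pose proof (psum_gap leQ Htot D g Hg x y dd HD Hx Hy (Nat.max N (S (g dd))) ltac:(lia)).
    pose proof (phi_ge leQ D g y (Nat.max N (S (g dd)))). lra. }
  pose proof (pow_lt (/2) (g dd) ltac:(lra)). lra.
Qed.

Lemma phi_q0 {Q} (leQ : Q -> Q -> Prop) (Htot : total_order Q leQ) (q0 : Q)
  (Hq0 : forall q, leQ q0 q) D g : phi leQ D g q0 = 0.
Proof.
  apply Rle_antisym; [|apply phi_nonneg].
  apply phi_le. intros N. induction N; simpl; [lra|].
  unfold term. destruct emi as [[d [_ [_ H3]]]|]; [|lra].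
  exfalso. apply (strict_not_le leQ Htot d q0 H3 (Hq0 d)).
Qed.

Lemma open_interval {Q} (leQ : Q -> Q -> Prop) x z :
  order_open leQ (fun q => strict leQ x q /\ strict leQ q z).
Proof.
  intros q Hq. exists ((fun q => strict leQ x q) :: (fun q => strict leQ q z) :: nil).
  split; [|split].
  - constructor; [exists x; right; tauto|]. constructor; [exists z; left; tauto|constructor].
  - intros S [<-|[<-|[]]]; tauto.
  - intros y Hy. split; apply Hy; simpl; tauto.
Qed.

Lemma embed_of_sep {Q} (leQ : Q -> Q -> Prop) (q0 : Q) (Htot : total_order Q leQ)
  (Hq0 : forall q, leQ q0 q) : order_separable leQ ->
  exists F : Q -> R0lex, F q0 = R0lex_bot /\ forall x y, strict leQ x y -> ltR0 (F x) (F y).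
Proof.
  intros [D [[g Hg] HD]].
  set (ph := phi leQ D g).
  assert (Hno3 : forall x y z, strict leQ x y -> strict leQ y z -> ph x = ph z -> False).
  { intros x y z Hxy Hyz He.
    destruct (HD _ (open_interval leQ x z) (ex_intro _ y (conj Hxy Hyz))) as [dd [[H1 H2] H3]].
    pose proof (phi_gap leQ Htot D g Hg x z dd H3 (proj1 H1) H2). unfold ph in He. lra. }
  set (bit := fun x => if emi (exists x', strict leQ x' x /\ ph x' = ph x) then true else false).
  exists (fun x => exist (fun p : R * bool => 0 <= fst p) (ph x, bit x) (phi_nonneg leQ D g x)).
  split.
  - apply R0lex_eq. simpl. unfold ph. rewrite (phi_q0 leQ Htot q0 Hq0). f_equal.
    unfold bit. destruct emi as [[x' [H1 _]]|]; auto.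
    exfalso; apply (strict_not_le leQ Htot x' q0 H1 (Hq0 x')).
  - intros x y Hxy.
    assert (Hm : ph x <= ph y) by (apply (phi_mono leQ Htot); apply Hxy).
    destruct (Rle_lt_or_eq_dec _ _ Hm) as [Hl|He].
    + apply ltR0_of_fst. simpl. exact Hl.
    + assert (Bx : bit x = false).
      { unfold bit. destruct emi as [[x' [H1 H2]]|]; auto.
        exfalso. apply (Hno3 x' x y H1 Hxy). congruence. }
      assert (By : bit y = true).
      { unfold bit. destruct emi as [|Hn]; auto. exfalso; apply Hn; exists x; auto. }
      split.
      * right. simpl. split; auto. rewrite Bx; exact I.
      * intros Heq. apply (f_equal (fun u => snd (proj1_sig u))) in Heq. simpl in Heq. congruence.
Qed.

Lemma ultra6 {X P} (leP : P -> P -> Prop) (d : X -> X -> P)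
  (Hs : forall x y, d x y = d y x) x1 x2 x3 :
  (d x1 x2 = d x1 x3 /\ leP (d x2 x3) (d x1 x2)) \/
  (d x1 x2 = d x2 x3 /\ leP (d x1 x3) (d x1 x2)) \/
  (d x1 x3 = d x2 x3 /\ leP (d x1 x2) (d x1 x3)) ->
  tri leP d x1 x2 x3 \/ tri leP d x1 x3 x2 \/ tri leP d x2 x1 x3 \/
  tri leP d x2 x3 x1 \/ tri leP d x3 x1 x2 \/ tri leP d x3 x2 x1.
Proof.
  unfold tri. intros [[H1 H2]|[[H1 H2]|[H1 H2]]].
  - right; right; left. rewrite (Hs x2 x1). split; auto.
  - left. auto.
  - right; left. rewrite (Hs x3 x2). split; auto.
Qed.

Definition dmax {Q} (leQ : Q -> Q -> Prop) (q0 : Q) (a b : Q) : Q :=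
  if emi (a = b) then q0 else if emi (leQ a b) then b else a.

Lemma dmax_strict {Q} (leQ : Q -> Q -> Prop) (q0 : Q) (Htot : total_order Q leQ) a b :
  strict leQ a b -> dmax leQ q0 a b = b /\ dmax leQ q0 b a = b.
Proof.
  intros [H Hne]. unfold dmax. split.
  - destruct emi; [contradiction|]. destruct emi; tauto.
  - destruct emi; [congruence|]. destruct emi as [H'|]; auto.
    exfalso; apply Hne; apply (to_antisym _ _ Htot); auto.
Qed.

Lemma dmax_pum {Q} (leQ : Q -> Q -> Prop) (q0 : Q) (Htot : total_order Q leQ)
  (Hq0 : forall q, leQ q0 q) : pseudoultrametric leQ q0 (dmax leQ q0).
Proof.
  assert (Hdiag : forall x, dmax leQ q0 x x = q0).
  { intros x; unfold dmax; destruct emi; congruence. }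
  assert (Hs : forall x y, dmax leQ q0 x y = dmax leQ q0 y x).
  { intros x y. destruct (trich leQ Htot x y) as [->|[H|H]]; auto.
    - destruct (dmax_strict leQ q0 Htot x y H); congruence.
    - destruct (dmax_strict leQ q0 Htot y x H); congruence. }
  split; [constructor; exact q0|]. split; [exact Hs|]. split; [exact Hdiag|].
  intros x1 x2 x3. apply ultra6; auto.
  destruct (classic (x1 = x2)) as [<-|N12].
  { right; right. rewrite Hdiag. auto. }
  destruct (classic (x1 = x3)) as [<-|N13].
  { right; left. rewrite Hdiag. rewrite (Hs x2 x1). auto. }
  destruct (classic (x2 = x3)) as [<-|N23].
  { left. rewrite Hdiag. auto. }
  assert (Hl : forall a b, leQ a b -> a <> b -> strict leQ a b) by (intros; split; auto).
  assert (Hmax : forall a b m, a <> b -> leQ a m -> leQ b m -> leQ (dmax leQ q0 a b) m).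
  { intros a b m Hne Ha Hb. unfold dmax. destruct emi; [contradiction|]. destruct emi; auto. }
  assert (Hne' : forall a b : Q, a <> b -> b <> a) by (intros; congruence).
  assert (Hm : ((leQ x1 x3 /\ leQ x2 x3) \/ (leQ x1 x2 /\ leQ x3 x2)) \/ (leQ x2 x1 /\ leQ x3 x1)).
  { destruct (to_total _ _ Htot x1 x2) as [H12|H21]; destruct (to_total _ _ Htot x2 x3) as [H23|H32].
    - left; left; split; auto. eapply (to_trans _ _ Htot); eauto.
    - left; right; auto.
    - destruct (to_total _ _ Htot x1 x3); [left; left|right]; split; auto.
    - right; split; auto. eapply (to_trans _ _ Htot); eauto. }
  destruct Hm as [[[Ha Hb]|[Ha Hb]]|[Ha Hb]].
  - right; right.
    destruct (dmax_strict leQ q0 Htot x1 x3 (Hl _ _ Ha N13)) as [E1 _].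
    destruct (dmax_strict leQ q0 Htot x2 x3 (Hl _ _ Hb N23)) as [E2 _].
    rewrite E1, E2. split; auto.
  - right; left.
    destruct (dmax_strict leQ q0 Htot x1 x2 (Hl _ _ Ha N12)) as [E1 _].
    destruct (dmax_strict leQ q0 Htot x3 x2 (Hl _ _ Hb (Hne' _ _ N23))) as [_ E2].
    rewrite E1, E2. split; auto.
  - left.
    destruct (dmax_strict leQ q0 Htot x2 x1 (Hl _ _ Ha (Hne' _ _ N12))) as [_ E1].
    destruct (dmax_strict leQ q0 Htot x3 x1 (Hl _ _ Hb (Hne' _ _ N13))) as [_ E2].
    rewrite E1, E2. split; auto.
Qed.

Lemma dir12 {Q} (leQ : Q -> Q -> Prop) (q0 : Q) (Htot : total_order Q leQ)
  (Hq0 : forall q, leQ q0 q) : order_separable leQ ->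
   (forall (X : Type) (d : X -> X -> Q), pseudoultrametric leQ q0 d ->
      exists (Y : Type) (rho : Y -> Y -> R0lex),
        pseudoultrametric leR0lex R0lex_bot rho /\ weakly_similar leQ d rho).
Proof.
  intros Hsep. destruct (embed_of_sep leQ q0 Htot Hq0 Hsep) as [F [HF0 HF]].
  intros X d [Hinh [Hs [Hdiag Htri]]].
  assert (Hmono : forall u v, leQ u v -> leR0lex (F u) (F v)) by (apply mono_le; auto).
  assert (Htr : forall a b c, tri leQ d a b c -> tri leR0lex (fun x y => F (d x y)) a b c).
  { intros a b c [H1 H2]. split; [apply Hmono; auto| rewrite H2; auto]. }
  exists X, (fun x y => F (d x y)). split.
  - split; [exact Hinh|]. split; [intros; rewrite Hs; auto|]. split; [intros; rewrite Hdiag; auto|].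
    intros x1 x2 x3. destruct (Htri x1 x2 x3) as [H|[H|[H|[H|[H|H]]]]]; apply Htr in H; tauto.
  - exists (fun x => x), F. split.
    + split; [split; [auto| intros y; exists y; auto]|].
      split; [auto|]. split.
      { intros q [x [y <-]]. exists x, y; auto. }
      split.
      { intros q1 q2 _ _ He. destruct (trich leQ Htot q1 q2) as [|[H|H]]; auto;
        apply HF in H; destruct H; congruence. }
      intros r [x [y <-]]. exists (d x y); split; [exists x, y|]; auto.
    + intros q1 q2 _ _. split; [apply Hmono|apply (reflect_le leQ Htot F HF)].
Qed.

Lemma dir31 {Q} (leQ : Q -> Q -> Prop) (q0 : Q) (Htot : total_order Q leQ)
  (Hq0 : forall q, leQ q0 q) :
   (forall (X : Type) (d : X -> X -> Q), pseudoultrametric leQ q0 d ->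
      exists (Y : Type) (rho : Y -> Y -> R0lex),
        pseudoultrametric leR0lex R0lex_bot rho /\ combinatorially_similar d rho) ->
   order_separable leQ.
Proof.
  intros H3. destruct (H3 Q (dmax leQ q0) (dmax_pum leQ q0 Htot Hq0)) as
    [Y [rho [[_ [Hrs [Hrd Hrt]]] [h [f [Hbij [Hrel [Hr1 [Hinj Hsurj]]]]]]]]].
  assert (Hrange : forall q, in_range (dmax leQ q0) q).
  { intros q. destruct (classic (q = q0)) as [->|Hne].
    - exists q0, q0. unfold dmax. destruct emi; congruence.
    - exists q0, q. apply (dmax_strict leQ q0 Htot); split; auto. }
  assert (Hf0 : f q0 = R0lex_bot).
  { rewrite <- (Hrd (h q0)), Hrel. unfold dmax. destruct emi; congruence. }
  assert (Hfinj : forall a b, f a = f b -> a = b) by (intros; apply Hinj; auto).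
  apply (sep_of_embed leQ q0 Htot Hq0 f).
  intros y z Hyz. split; [|intros E; apply Hfinj in E; destruct Hyz; contradiction].
  destruct (classic (y = q0)) as [->|Hy0].
  { rewrite Hf0; apply bot_le. }
  assert (H0y : strict leQ q0 y) by (split; auto).
  assert (H0z : strict leQ q0 z) by (eapply strict_trans_le; eauto; apply Hyz).
  destruct (dmax_strict leQ q0 Htot _ _ H0y) as [E1 E2].
  destruct (dmax_strict leQ q0 Htot _ _ H0z) as [E3 E4].
  destruct (dmax_strict leQ q0 Htot _ _ Hyz) as [E5 E6].
  assert (Hne : f y <> f z) by (intros E; apply Hfinj in E; destruct Hyz; contradiction).
  destruct (Hrt (h q0) (h y) (h z)) as [H|[H|[H|[H|[H|H]]]]]; unfold tri in H;
    rewrite !Hrel, ?E1, ?E2, ?E3, ?E4, ?E5, ?E6 in H; destruct H as [H1 H2];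
    try (exfalso; apply Hne; congruence); auto.
Qed.

Theorem theorem4p20 (Q : Type) (leQ : Q -> Q -> Prop) (q0 : Q)
  (Htot : total_order Q leQ) (Hq0 : forall q, leQ q0 q)
  (Hcard : exists a b : Q, a <> b) :
  (order_separable leQ <->
   (forall (X : Type) (d : X -> X -> Q), pseudoultrametric leQ q0 d ->
      exists (Y : Type) (rho : Y -> Y -> R0lex),
        pseudoultrametric leR0lex R0lex_bot rho /\ weakly_similar leQ d rho)) /\
  (order_separable leQ <->
   (forall (X : Type) (d : X -> X -> Q), pseudoultrametric leQ q0 d ->
      exists (Y : Type) (rho : Y -> Y -> R0lex),
        pseudoultrametric leR0lex R0lex_bot rho /\ combinatorially_similar d rho)).
Proof.
  assert (H23 : (forall (X : Type) (d : X -> X -> Q), pseudoultrametric leQ q0 d ->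
      exists (Y : Type) (rho : Y -> Y -> R0lex),
        pseudoultrametric leR0lex R0lex_bot rho /\ weakly_similar leQ d rho) ->
   (forall (X : Type) (d : X -> X -> Q), pseudoultrametric leQ q0 d ->
      exists (Y : Type) (rho : Y -> Y -> R0lex),
        pseudoultrametric leR0lex R0lex_bot rho /\ combinatorially_similar d rho)).
  { intros H X d Hd. destruct (H X d Hd) as [Y [rho [H1 [h [f [H2 _]]]]]].
    exists Y, rho; split; auto. exists h, f; auto. }
  split; split.
  - apply dir12; auto.
  - intros H. apply (dir31 leQ q0 Htot Hq0). apply H23; auto.
  - intros H. apply H23. apply dir12; auto.
  - apply (dir31 leQ q0 Htot Hq0).
Qed.
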